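(* Let $\mathcal R$ be a graded commutative 2-ring and let $(R,G,\pi,\{g_\gamma\},\{\varphi_x\})$ be a tightening of $\mathcal R$. Then restriction $\mathcal I\mapsto\mathrm r(\mathcal I)$ and extension $I\mapsto\mathrm e(I)$ are mutually inverse inclusion-preserving bijections between homogeneous ideals of $\mathcal R$ and homogeneous ideals of $R$, and they restrict to a homeomorphism $\operatorname{Spec}^h(R)\cong\operatorname{Spc}(\mathcal R)$.
   Context: A graded commutative 2-ring $\mathcal R$ is an essentially small preadditive symmetric monoidal category (tensor additive in each variable) in which all objects are invertible; its grading 2-group $\mathcal G$ is its groupoid of objects and isomorphisms, and $K_0(\mathcal G)$ is the group of isomorphism classes. A morphism $\tilde r$ is a translate of $r$ if $\tilde r=v\circ(g\otimes r)\circ u$ for an object $g$ and isomorphisms $u,v$. A homogeneous ideal of $\mathcal R$ is a two-sided ideal of morphisms closed under tensoring with objects; prime: proper and $s\circ r\in\mathfrak p\Rightarrow s\in\mathfrak p$ or $r\in\mathfrak p$; $\operatorname{Spc}(\mathcal R)$ is the set of primes with Zariski topology. For an abelian group $G$ (written multiplicatively), a $G$-graded commutative ring is a ring $R=\bigoplus_{x\in G}R_x$ with $1\in R_1$, $R_xR_y\subseteq R_{xy}$, and a function $\tau\colon G\times G\to Z(R)_1^\times$ that is symmetric, bilinear, and satisfies $rs=\tau(|r|,|s|)sr$ for homogeneous $r,s$; $\operatorname{Spec}^h(R)$ is its space of homogeneous primes with Zariski topology. A tightening consists of such an $R$, a surjective homomorphism $\pi\colon G\to K_0(\mathcal G)$,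 representatives $g_\gamma$ for $\gamma\in K_0(\mathcal G)$ with $g_1=\mathbb 1$, and group isomorphisms $\varphi_x\colon R_x\to\mathcal R(\mathbb 1,g_{\pi(x)})$ such that: (1) $\varphi_x(rs)=\varphi_x(r)\circ\varphi_1(s)$ for $s\in R_1$, $r\in R_x$; (2) for $r\in R_x$, $s\in R_y$, the morphism $(\varphi_x(r)\otimes g_{\pi(y)})\circ\varphi_y(s)$ (with implicit unitor) is a translate of $\varphi_{xy}(rs)$. Write $\varphi=\bigsqcup_x\varphi_x$ on homogeneous elements. For a homogeneous ideal $\mathcal I$ of $\mathcal R$, $\mathrm r(\mathcal I)$ is the additive closure in $R$ of $\varphi^{-1}(\mathcal I)$; for a homogeneous ideal $I$ of $R$, $\mathrm e(I)$ is the homogeneous ideal of $\mathcal R$ generated by $\varphi$ of the homogeneous elements of $I$. *)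

(* Defs.v *)
From mathcomp Require Import all_boot all_algebra.
Set Implicit Arguments.
Unset Strict Implicit.
Unset Printing Implicit Defensive.
Import GRing.Theory.
Local Open Scope ring_scope.

(* Raw data of a preadditive symmetric monoidal category. *)
Record cat2data := Cat2Data {
  Ob : Type;
  Mor : Ob -> Ob -> zmodType;
  idm : forall a, Mor a a;
  comp : forall a b c, Mor b c -> Mor a b -> Mor a c;
  tens : Ob -> Ob -> Ob;
  tensm : forall a b c d, Mor a b -> Mor c d -> Mor (tens a c) (tens b d);
  unito : Ob;
  alpha : forall a b c, Mor (tens (tens a b) c) (tens a (tens b c));
  lam : forall a, Mor (tens unito a) a;
  lami : forall a, Mor a (tens unito a);
  rho : forall a, Mor (tens a unito) a;
  beta : forall a b, Mor (tens a b) (tens b a)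
}.

Arguments idm {_} _.
Arguments comp {_ _ _ _} _ _.
Arguments tens {_} _ _.
Arguments tensm {_ _ _ _ _} _ _.
Arguments unito {_}.
Arguments alpha {_} _ _ _.
Arguments lam {_} _.
Arguments lami {_} _.
Arguments rho {_} _.
Arguments beta {_} _ _.

Declare Scope cat_scope.
Delimit Scope cat_scope with cat.
Notation "f \oc g" := (comp f g) (at level 40, left associativity) : cat_scope.
Notation "f \ot g" := (tensm f g) (at level 35, no associativity) : cat_scope.
Notation "a \otO b" := (tens a b) (at level 35, no associativity) : cat_scope.
Local Open Scope cat_scope.

Definition isIso (C : cat2data) (a b : Ob C) (f : Mor a b) : Prop :=
  exists g : Mor b a, g \oc f = idm a /\ f \oc g = idm b.

Record cat2axioms (C : cat2data) : Prop := {
  comp_assoc : forall (a b c d : Ob C) (f : Mor a b) (g : Mor b c) (h : Mor c d),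
      h \oc (g \oc f) = (h \oc g) \oc f;
  comp_id_l : forall (a b : Ob C) (f : Mor a b), idm b \oc f = f;
  comp_id_r : forall (a b : Ob C) (f : Mor a b), f \oc idm a = f;
  comp_addl : forall (a b c : Ob C) (g g' : Mor b c) (f : Mor a b),
      (g + g') \oc f = g \oc f + g' \oc f;
  comp_addr : forall (a b c : Ob C) (g : Mor b c) (f f' : Mor a b),
      g \oc (f + f') = g \oc f + g \oc f';
  tens_id : forall a b : Ob C, idm a \ot idm b = idm (a \otO b);
  tens_comp : forall (a b c a' b' c' : Ob C) (f : Mor a b) (g : Mor b c)
      (f' : Mor a' b') (g' : Mor b' c'),
      (g \oc f) \ot (g' \oc f') = (g \ot g') \oc (f \ot f');
  tens_addl : forall (a b c d : Ob C) (f f' : Mor a b) (g : Mor c d),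
      (f + f') \ot g = f \ot g + f' \ot g;
  tens_addr : forall (a b c d : Ob C) (f : Mor a b) (g g' : Mor c d),
      f \ot (g + g') = f \ot g + f \ot g';
  alpha_iso : forall a b c : Ob C, isIso (alpha a b c);
  lam_lami : forall a : Ob C, lam a \oc lami a = idm a;
  lami_lam : forall a : Ob C, lami a \oc lam a = idm (unito \otO a);
  rho_iso : forall a : Ob C, isIso (rho a);
  alpha_nat : forall (a b c a' b' c' : Ob C) (f : Mor a a') (g : Mor b b') (h : Mor c c'),
      alpha a' b' c' \oc ((f \ot g) \ot h) = (f \ot (g \ot h)) \oc alpha a b c;
  lam_nat : forall (a b : Ob C) (f : Mor a b),
      lam b \oc (idm unito \ot f) = f \oc lam a;
  rho_nat : forall (a b : Ob C) (f : Mor a b),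
      rho b \oc (f \ot idm unito) = f \oc rho a;
  beta_nat : forall (a b a' b' : Ob C) (f : Mor a a') (g : Mor b b'),
      beta a' b' \oc (f \ot g) = (g \ot f) \oc beta a b;
  pentagon : forall a b c d : Ob C,
      alpha a b (c \otO d) \oc alpha (a \otO b) c d
      = (idm a \ot alpha b c d) \oc alpha a (b \otO c) d \oc (alpha a b c \ot idm d);
  triangle : forall a b : Ob C,
      (idm a \ot lam b) \oc alpha a unito b = rho a \ot idm b;
  hexagon : forall a b c : Ob C,
      alpha b c a \oc beta a (b \otO c) \oc alpha a b c
      = (idm b \ot beta a c) \oc alpha b a c \oc (beta a b \ot idm c);
  symmetry : forall a b : Ob C, beta b a \oc beta a b = idm (a \otO b);
  all_invertible : forall a : Ob C, exists b : Ob C, exists f : Mor (a \otO b) unito, isIso f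
}.

Record twoRing := TwoRing { tr_data :> cat2data; tr_ax : cat2axioms tr_data }.

Definition translate (C : cat2data) (a b c d : Ob C) (r : Mor a b) (t : Mor c d) : Prop :=
  exists (h : Ob C) (u : Mor c (h \otO a)) (v : Mor (h \otO b) d),
    [/\ isIso u, isIso v & t = v \oc (idm h \ot r) \oc u].

(* K_0 of the grading 2-group: isomorphism classes of objects *)
Definition isoclass (C : cat2data) (a : Ob C) : Ob C -> Prop :=
  fun b => exists f : Mor a b, isIso f.
Definition K0 (C : cat2data) : Type := {P : Ob C -> Prop | exists a, P = isoclass a}.
Definition cls (C : cat2data) (a : Ob C) : K0 C :=
  exist _ (isoclass a) (ex_intro _ a erefl).

Definition MorPred (C : cat2data) := forall a b : Ob C, Mor a b -> Prop.

Definition morIncl (C : cat2data) (I J : MorPred C) : Prop :=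
  forall (a b : Ob C) (f : Mor a b), I a b f -> J a b f.

Definition isHomIdealC (C : cat2data) (I : MorPred C) : Prop :=
  [/\ (forall a b : Ob C, I a b 0),
      (forall (a b : Ob C) (f g : Mor a b), I a b f -> I a b g -> I a b (f - g)),
      (forall (a b c : Ob C) (f : Mor a b) (g : Mor b c), I a b f -> I a c (g \oc f)),
      (forall (a b c : Ob C) (f : Mor a b) (g : Mor b c), I b c g -> I a c (g \oc f))
    & (forall (h a b : Ob C) (f : Mor a b),
          I a b f -> I _ _ (idm h \ot f) /\ I _ _ (f \ot idm h))].

Definition isPrimeC (C : cat2data) (p : MorPred C) : Prop :=
  [/\ isHomIdealC p,
      (exists (a b : Ob C) (f : Mor a b), ~ p a b f)
    & (forall (a b c : Ob C) (f : Mor a b) (g : Mor b c),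
          p a c (g \oc f) -> p b c g \/ p a b f)].

Definition Spc (C : cat2data) : Type := {p : MorPred C | isPrimeC p}.

Inductive gen_open (X : Type) (B : (X -> Prop) -> Prop) : (X -> Prop) -> Prop :=
| go_basic : forall Z, B Z -> gen_open B (fun x => ~ Z x)
| go_top : gen_open B (fun _ => True)
| go_inter : forall U V, gen_open B U -> gen_open B V -> gen_open B (fun x => U x /\ V x)
| go_union : forall F : (X -> Prop) -> Prop,
    (forall U, F U -> gen_open B U) -> gen_open B (fun x => exists U, F U /\ U x)
| go_ext : forall U V, (forall x, U x <-> V x) -> gen_open B U -> gen_open B V.

Definition continuous_gen (X Y : Type) (BX : (X -> Prop) -> Prop)
    (BY : (Y -> Prop) -> Prop) (f : X -> Y) : Prop :=
  forall U, gen_open BY U -> gen_open BX (fun x => U (f x)).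

Definition zariskiC (C : cat2data) (Z : Spc C -> Prop) : Prop :=
  exists S : MorPred C, forall P : Spc C, Z P <-> morIncl S (proj1_sig P).

Definition homog (G : zmodType) (R : pzRingType) (Rx : G -> R -> Prop) (r : R) : Prop :=
  exists x, Rx x r.

Definition gradedComRing (G : zmodType) (R : pzRingType) (Rx : G -> R -> Prop)
    (tau : G -> G -> R) : Prop :=
  [/\
      (forall x, Rx x 0) /\ (forall x r s, Rx x r -> Rx x s -> Rx x (r - s)),
      Rx 0 1 /\ (forall x y r s, Rx x r -> Rx y s -> Rx (x + y) (r * s)),
      (* R is the internal direct sum of the R_x *)
      (forall r : R, exists (s : seq G) (f : G -> R),
          [/\ uniq s, (forall x, Rx x (f x)) & r = \sum_(x <- s) f x])
      /\ (forall (s : seq G) (f : G -> R), uniq s -> (forall x, Rx x (f x)) ->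
            \sum_(x <- s) f x = 0 -> forall x, x \in s -> f x = 0),
      (forall x y, [/\ Rx 0 (tau x y), (forall r, tau x y * r = r * tau x y) &
          exists u, [/\ Rx 0 u, (forall r, u * r = r * u), u * tau x y = 1 & tau x y * u = 1]])
      /\ (forall x y, tau x y = tau y x)
      /\ (forall x y z, tau (x + y) z = tau x z * tau y z)
      /\ (forall x y z, tau x (y + z) = tau x y * tau x z)
    &
      forall x y r s, Rx x r -> Rx y s -> r * s = tau x y * (s * r)].

Definition isHomIdealR (G : zmodType) (R : pzRingType) (Rx : G -> R -> Prop)
    (I : R -> Prop) : Prop :=
  [/\ I 0, (forall r s, I r -> I s -> I (r - s)),
      (forall a r, I r -> I (a * r)), (forall a r, I r -> I (r * a))
    & (forall r, I r -> exists (n : nat) (f : 'I_n -> R),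
          (forall i, homog Rx (f i) /\ I (f i)) /\ r = \sum_(i < n) f i)].

Definition isHomPrimeR (G : zmodType) (R : pzRingType) (Rx : G -> R -> Prop)
    (p : R -> Prop) : Prop :=
  [/\ isHomIdealR Rx p, (exists r, ~ p r)
    & (forall r s, homog Rx r -> homog Rx s -> p (r * s) -> p r \/ p s)].

Definition SpecH (G : zmodType) (R : pzRingType) (Rx : G -> R -> Prop) : Type :=
  {p : R -> Prop | isHomPrimeR Rx p}.

Definition zariskiR (G : zmodType) (R : pzRingType) (Rx : G -> R -> Prop)
    (Z : SpecH Rx -> Prop) : Prop :=
  exists S : R -> Prop, forall P : SpecH Rx, Z P <-> (forall r, S r -> proj1_sig P r).

Definition tightening (C : cat2data) (G : zmodType) (R : pzRingType)
    (Rx : G -> R -> Prop) (pi : G -> K0 C) (g : K0 C -> Ob C)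
    (phi : forall x : G, R -> Mor unito (g (pi x))) : Prop :=
  [/\
      (forall x y, pi (x + y) = cls (g (pi x) \otO g (pi y)))
      /\ (forall gam : K0 C, exists x, pi x = gam),
      (forall gam : K0 C, cls (g gam) = gam) /\ g (cls unito) = unito,
      (forall x r s, Rx x r -> Rx x s -> phi x (r + s) = phi x r + phi x s)
      /\ (forall x r s, Rx x r -> Rx x s -> phi x r = phi x s -> r = s)
      /\ (forall x (f : Mor unito (g (pi x))), exists r, Rx x r /\ phi x r = f),
      (* condition (1); e : g_{pi 0} = unit identifies Mor(1, g_{pi 0}) with Mor(1,1) *)
      (forall (e : g (pi 0) = unito) x r s, Rx x r -> Rx 0 s ->
          phi x (r * s) = phi x r \oc eq_rect _ (fun o => Mor unito o) (phi 0 s) _ e)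
    &
      (forall x y r s, Rx x r -> Rx y s ->
          translate (phi (x + y) (r * s))
            ((phi x r \ot idm (g (pi y))) \oc lami (g (pi y)) \oc phi y s))].

Definition rI (C : cat2data) (G : zmodType) (R : pzRingType) (Rx : G -> R -> Prop)
    (pi : G -> K0 C) (g : K0 C -> Ob C) (phi : forall x : G, R -> Mor unito (g (pi x)))
    (I : MorPred C) : R -> Prop :=
  fun r => exists (n : nat) (f : 'I_n -> R) (xs : 'I_n -> G),
      (forall i, Rx (xs i) (f i) /\ I _ _ (phi (xs i) (f i))) /\ r = \sum_(i < n) f i.

Definition eI (C : cat2data) (G : zmodType) (R : pzRingType) (Rx : G -> R -> Prop)
    (pi : G -> K0 C) (g : K0 C -> Ob C) (phi : forall x : G, R -> Mor unito (g (pi x)))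
    (I : R -> Prop) : MorPred C :=
  fun a b f => forall J : MorPred C, isHomIdealC J ->
      (forall x r, Rx x r -> I r -> J _ _ (phi x r)) -> J a b f.

(* Main.v *)
Require Import Defs.
From mathcomp Require Import all_boot all_algebra.
From Stdlib Require Import ClassicalEpsilon FunctionalExtensionality PropExtensionality ProofIrrelevance Classical.
Set Implicit Arguments.
Unset Strict Implicit.
Unset Printing Implicit Defensive.
Import GRing.Theory.
Local Open Scope ring_scope.
Local Open Scope cat_scope.
Section Cat.
Variable C : twoRing.
Local Notation ax := (tr_ax C).
Local Notation Ob := (Ob C).

Lemma cA (a b c d : Ob) (f : Mor a b) (g : Mor b c) (h : Mor c d) :
  h \oc (g \oc f) = h \oc g \oc f.
Proof. exact: (comp_assoc ax f g h). Qed.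
Lemma c1l (a b : Ob) (f : Mor a b) : idm b \oc f = f.
Proof. exact: (comp_id_l ax f). Qed.
Lemma c1r (a b : Ob) (f : Mor a b) : f \oc idm a = f.
Proof. exact: (comp_id_r ax f). Qed.
Lemma tC (a b c a' b' c' : Ob) (f : Mor a b) (g : Mor b c) (f' : Mor a' b') (g' : Mor b' c') :
  (g \oc f) \ot (g' \oc f') = (g \ot g') \oc (f \ot f').
Proof. exact: (tens_comp ax f g f' g'). Qed.
Lemma tI (a b : Ob) : idm a \ot idm b = idm (a \otO b).
Proof. exact: (tens_id ax a b). Qed.

Lemma comp0l (a b c : Ob) (f : Mor a b) : (0 : Mor b c) \oc f = 0.
Proof.
have h := comp_addl ax (0 : Mor b c) 0 f; rewrite addr0 in h.
by apply: (addrI ((0 : Mor b c) \oc f)); rewrite addr0 -h.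
Qed.
Lemma comp0r (a b c : Ob) (g : Mor b c) : g \oc (0 : Mor a b) = 0.
Proof.
have h := comp_addr ax g (0 : Mor a b) 0; rewrite addr0 in h.
by apply: (addrI (g \oc (0 : Mor a b))); rewrite addr0 -h.
Qed.
Lemma compNl (a b c : Ob) (g : Mor b c) (f : Mor a b) : (- g) \oc f = - (g \oc f).
Proof. by apply/eqP; rewrite -addr_eq0 -(comp_addl ax) addNr comp0l. Qed.
Lemma compNr (a b c : Ob) (g : Mor b c) (f : Mor a b) : g \oc (- f) = - (g \oc f).
Proof. by apply/eqP; rewrite -addr_eq0 -(comp_addr ax) addNr comp0r. Qed.
Lemma compBl (a b c : Ob) (g g' : Mor b c) (f : Mor a b) : (g - g') \oc f = g \oc f - g' \oc f.
Proof. by rewrite (comp_addl ax) compNl. Qed.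
Lemma compBr (a b c : Ob) (g : Mor b c) (f f' : Mor a b) : g \oc (f - f') = g \oc f - g \oc f'.
Proof. by rewrite (comp_addr ax) compNr. Qed.
Lemma tens0r (a b c d : Ob) (f : Mor a b) : f \ot (0 : Mor c d) = 0.
Proof.
have h := tens_addr ax f (0 : Mor c d) 0; rewrite addr0 in h.
by apply: (addrI (f \ot (0 : Mor c d))); rewrite addr0 -h.
Qed.
Lemma tensNr (a b c d : Ob) (f : Mor a b) (g : Mor c d) : f \ot (- g) = - (f \ot g).
Proof. by apply/eqP; rewrite -addr_eq0 -(tens_addr ax) addNr tens0r. Qed.
Lemma tensBr (a b c d : Ob) (f : Mor a b) (g g' : Mor c d) : f \ot (g - g') = f \ot g - f \ot g'.
Proof. by rewrite (tens_addr ax) tensNr. Qed.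

Lemma iso_id (a : Ob) : isIso (idm a).
Proof. by exists (idm a); rewrite c1l. Qed.
Lemma iso_comp (a b c : Ob) (f : Mor a b) (g : Mor b c) : isIso f -> isIso g -> isIso (g \oc f).
Proof.
move=> [f' [h1 h2]] [g' [h3 h4]]; exists (f' \oc g'); split.
  by rewrite cA -(cA g) h3 c1r.
by rewrite cA -(cA f') h2 c1r.
Qed.
Lemma iso_inv (a b : Ob) (f : Mor a b) (f' : Mor b a) : f' \oc f = idm a -> f \oc f' = idm b -> isIso f'.
Proof. by move=> h1 h2; exists f. Qed.
Lemma iso_tens (a b c d : Ob) (f : Mor a b) (g : Mor c d) : isIso f -> isIso g -> isIso (f \ot g).
Proof.
move=> [f' [h1 h2]] [g' [h3 h4]]; exists (f' \ot g'); split; by rewrite -tC ?h1 ?h2 ?h3 ?h4 tI.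
Qed.
Lemma iso_beta (a b : Ob) : isIso (beta a b).
Proof. by exists (beta b a); rewrite !(symmetry ax). Qed.
Lemma iso_lam (a : Ob) : isIso (lam a).
Proof. by exists (lami a); rewrite (lam_lami ax) (lami_lam ax). Qed.
Lemma iso_lami (a : Ob) : isIso (lami a).
Proof. by exists (lam a); rewrite (lam_lami ax) (lami_lam ax). Qed.

End Cat.
Section Eta.
Variable C : twoRing.
Local Notation ax := (tr_ax C).
Local Notation Ob := (Ob C).
Variables (g g' : Ob) (w : Mor (g \otO g') unito).
Hypothesis Hw : isIso w.

Fact eta_key : unit. Proof. by []. Qed.
Definition eta_def (X : Ob) : Mor ((X \otO g) \otO g') X :=
  rho X \oc (idm X \ot w) \oc alpha X g g'.
Definition eta := locked_with eta_key eta_def.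
Lemma etaE X : eta X = eta_def X. Proof. by rewrite /eta unlock. Qed.

Lemma eta_nat (X Y : Ob) (f : Mor X Y) :
  eta Y \oc ((f \ot idm g) \ot idm g') = f \oc eta X.
Proof.
rewrite !etaE /eta_def -cA (alpha_nat ax) tI cA -(cA (f \ot idm (g \otO g'))) -tC c1l c1r.
have -> : f \ot w = (f \ot idm unito) \oc (idm X \ot w) by rewrite -tC c1l c1r.
by rewrite !cA (rho_nat ax).
Qed.

Lemma eta_iso (X : Ob) : isIso (eta X).
Proof.
rewrite etaE; apply: iso_comp; first exact: (alpha_iso ax).
apply: iso_comp; last exact: (rho_iso ax).
exact: iso_tens (iso_id _) Hw.
Qed.
End Eta.
Section Cat2.
Variable C : twoRing.
Local Notation ax := (tr_ax C).
Local Notation Ob := (Ob C).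

Lemma eta_id (g g' : Ob) (w : Mor (g \otO g') unito) (X Y : Ob) (P : Mor X Y)
  (ei : Mor X ((X \otO g) \otO g')) : eta w X \oc ei = idm _ ->
  P = eta w Y \oc ((P \ot idm g) \ot idm g') \oc ei.
Proof. by move=> e; rewrite eta_nat -cA e c1r. Qed.

Lemma faithful (g0 X Y : Ob) (P Q : Mor X Y) : P \ot idm g0 = Q \ot idm g0 -> P = Q.
Proof.
have [g' [w Hw]] := all_invertible ax g0.
have [ei [e1 e2]] := eta_iso Hw X.
by move=> e; rewrite (eta_id P e2) (eta_id Q e2) e.
Qed.

Lemma ideal_facts (J : MorPred C) : isHomIdealC J ->
  [/\ forall (a b c : Ob) (f : Mor a b) (g : Mor b c), J _ _ f -> J _ _ (g \oc f),
      forall (a b c : Ob) (f : Mor a b) (g : Mor b c), J _ _ g -> J _ _ (g \oc f),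
      forall (h a b : Ob) (f : Mor a b), J _ _ f -> J _ _ (f \ot idm h)
    & forall (h a b : Ob) (f : Mor a b), J _ _ f -> J _ _ (idm h \ot f)].
Proof. by case=> _ _ Jl Jr Jt; split=> [//|//|h a b f /(Jt h) []|h a b f /(Jt h) []]. Qed.

Lemma canc_ideal (J : MorPred C) (HJ : isHomIdealC J) (g0 X Y : Ob) (P : Mor X Y) :
  J _ _ (P \ot idm g0) -> J _ _ P.
Proof.
have [Jl Jr Jt _] := ideal_facts HJ.
have [g' [w Hw]] := all_invertible ax g0.
have [ei [e1 e2]] := eta_iso Hw X.
move=> h; rewrite (eta_id P e2); apply: Jr; apply: Jl; exact: Jt.
Qed.

Lemma full (g0 A B : Ob) (Psi : Mor (A \otO g0) (B \otO g0)) :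
  exists beta : Mor A B, beta \ot idm g0 = Psi.
Proof.
have [g' [w Hw]] := all_invertible ax g0.
have [eiA [eA1 eA2]] := eta_iso Hw A.
have [eiB [eB1 eB2]] := eta_iso Hw B.
exists (eta w B \oc (Psi \ot idm g') \oc eiA).
apply: (@faithful g').
have h1 : forall beta : Mor A B, (beta \ot idm g0) \ot idm g' = eiB \oc (beta \oc eta w A).
  by move=> beta; rewrite -eta_nat cA eB1 c1l.
by rewrite h1 -!cA eA1 c1r !cA eB1 c1l.
Qed.

Lemma lami_nat (a b : Ob) (f : Mor a b) : lami b \oc f = (idm unito \ot f) \oc lami a.
Proof.
have e := lam_nat ax f.
rewrite -[lami b \oc f]c1r -(lam_lami ax a) cA -(cA (lam a)) -e cA (lami_lam ax) c1l //.
Qed.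

Lemma endo (g0 : Ob) (Xi : Mor g0 g0) :
  exists mu : Mor unito unito, forall phi : Mor unito g0, Xi \oc phi = phi \oc mu.
Proof.
have [mu0 e] := full (lami g0 \oc Xi \oc lam g0).
exists (lam unito \oc (mu0 \ot idm unito) \oc lami unito) => phi.
have -> : Xi = lam g0 \oc (mu0 \ot idm g0) \oc lami g0.
  by rewrite e !cA (lam_lami ax) c1l -cA (lam_lami ax) c1r.
rewrite -!cA lami_nat.
have -> : (mu0 \ot idm g0) \oc ((idm unito \ot phi) \oc lami unito)
   = (idm unito \ot phi) \oc ((mu0 \ot idm unito) \oc lami unito).
  by rewrite !cA -!tC !c1l !c1r.
by rewrite cA (lam_nat ax) !cA.
Qed.

Lemma red (H Y Z : Ob) (T : Mor unito Y) (U : Mor unito (H \otO unito)) (V : Mor (H \otO Y) Z) :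
  exists (Th : Mor Y Z) (nu : Mor unito unito),
    [/\ isIso nu, V \oc (idm H \ot T) \oc U = Th \oc T \oc nu
      & isIso U -> isIso V -> isIso Th].
Proof.
have [ri [r1 r2]] := rho_iso ax unito.
have [rHi [rH1 rH2]] := rho_iso ax H.
exists (V \oc ((rho H \oc U) \ot idm Y) \oc lami Y), (lam unito \oc ri); split.
- by apply: iso_comp; [exact: iso_inv r1 r2 | exact: iso_lam].
- have eU : U = ((rho H \oc U) \ot idm unito) \oc ri.
    have e1 := rho_nat ax (rho H \oc U).
    transitivity (rHi \oc (rho H \oc ((rho H \oc U) \ot idm unito)) \oc ri).
      by rewrite e1 -!cA r2 c1r !cA rH1 c1l.
    by rewrite cA rH1 c1l.
  rewrite {1}eU -cA.
  have -> : (idm H \ot T) \oc (((rho H \oc U) \ot idm unito) \oc ri)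
     = ((rho H \oc U) \ot idm Y) \oc ((idm unito \ot T) \oc ri).
    by rewrite !cA -!tC !c1l !c1r.
  have -> : idm unito \ot T = lami Y \oc T \oc lam unito.
    by rewrite -cA -(lam_nat ax) cA (lami_lam ax) c1l.
  by rewrite !cA.
- move=> iU iV; apply: iso_comp; first exact: iso_lami.
  apply: iso_comp iV; apply: iso_tens (iso_id _).
  by apply: iso_comp iU _; exists rHi.
Qed.

Lemma trans_red (Y Z : Ob) (r : Mor unito Y) (t : Mor unito Z) :
  translate r t -> exists (Th : Mor Y Z) (nu : Mor unito unito),
    [/\ isIso Th, isIso nu & t = Th \oc r \oc nu].
Proof.
move=> [h [u [v [iu iv ->]]]].
have [Th [nu [inu -> iTh]]] := red r u v.
by exists Th, nu; split => //; apply: iTh.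
Qed.

End Cat2.
Lemma sig_eq (A : Type) (P : A -> Prop) (u v : {a : A | P a}) : proj1_sig u = proj1_sig v -> u = v.
Proof. apply: eq_sig_hprop => x p q; exact: proof_irrelevance. Qed.

Lemma cls_iso (C : twoRing) (a b : Ob C) : cls a = cls b -> exists f : Mor a b, isIso f.
Proof.
move=> e; have e' := f_equal (@proj1_sig _ _) e; rewrite /= in e'.
have : isoclass b b by exists (idm b); exact: iso_id.
by rewrite -e'.
Qed.

Lemma iso_cls (C : twoRing) (a b : Ob C) (f : Mor a b) : isIso f -> cls a = cls b.
Proof.
move=> [fi [h1 h2]]; apply: sig_eq => /=.
apply: functional_extensionality => c; apply: propositional_extensionality; split.
  by move=> [k ik]; exists (k \oc fi); apply: iso_comp ik; exists f.
by move=> [k ik]; exists (k \oc f); apply: iso_comp ik; exists fi.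
Qed.

Lemma eq_rect_surj (C : twoRing) (o : Ob C) (e : o = unito) (nu : Mor unito unito) :
  exists f : Mor unito o, eq_rect o (fun o => Mor unito o) f unito e = nu.
Proof. subst o; by exists nu. Qed.

Lemma cont_of_basic (X Y : Type) (BX : (X -> Prop) -> Prop) (BY : (Y -> Prop) -> Prop)
  (f : X -> Y) : (forall Z, BY Z -> BX (fun x => Z (f x))) -> continuous_gen BX BY f.
Proof.
move=> hb U hU; elim: hU => {U}.
- by move=> Z hZ; apply: (go_basic (hb Z hZ)).
- exact: go_top.
- by move=> U V _ hU _ hV; apply: go_inter hU hV.
- move=> F _ IH.
  apply: (@go_ext _ _ (fun x => exists V, (exists U, F U /\ V = (fun x => U (f x))) /\ V x)).
    move=> x; split.
      by move=> [V [[U [FU ->]] Vx]]; exists U.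
    by move=> [U [FU Ux]]; exists (fun x => U (f x)); split => //; exists U.
  by apply: go_union => V [U [FU ->]]; exact: IH.
- by move=> U V e _ hU; apply: (go_ext _ hU) => x; exact: e.
Qed.

Section Ring.
Variables (C : twoRing) (G : zmodType) (R : pzRingType) (Rx : G -> R -> Prop)
  (tau : G -> G -> R) (pi : G -> K0 C) (g : K0 C -> Ob C)
  (phi : forall x : G, R -> Mor unito (g (pi x))).
Hypothesis HR : gradedComRing Rx tau.
Hypothesis HT : tightening Rx phi.
Local Notation ax := (tr_ax C).
Local Notation gx x := (g (pi x)).

Lemma Rx0 x : Rx x 0. Proof. by case: HR => [[]]. Qed.
Lemma RxB x r s : Rx x r -> Rx x s -> Rx x (r - s).
Proof. by move=> h1 h2; case: HR => [[_ h]] _ _ _ _; apply: h. Qed.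
Lemma RxN x r : Rx x r -> Rx x (- r). Proof. by move=> h; rewrite -sub0r; apply: RxB => //; apply: Rx0. Qed.
Lemma RxD x r s : Rx x r -> Rx x s -> Rx x (r + s).
Proof. by move=> h1 h2; rewrite -[s]opprK; apply: RxB => //; apply: RxN. Qed.
Lemma RxM x y r s : Rx x r -> Rx y s -> Rx (x + y) (r * s).
Proof. by move=> h1 h2; case: HR => _ [_ h] _ _ _; apply: h. Qed.
Lemma Rx1 : Rx 0 1. Proof. by case: HR => _ [h _] _ _ _. Qed.
Lemma decomp_ex r : exists (s : seq G) (F : G -> R),
  [/\ uniq s, (forall x, Rx x (F x)) & r = \sum_(x <- s) F x].
Proof. by case: HR => _ _ [h _] _ _; apply: (h r). Qed.
Lemma decomp_uniq (s : seq G) (F : G -> R) : uniq s -> (forall x, Rx x (F x)) ->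
  \sum_(x <- s) F x = 0 -> forall x, x \in s -> F x = 0.
Proof. by case: HR => _ _ [_ h] _ _; apply: h. Qed.

Lemma pi_add x y : pi (x + y) = cls (gx x \otO gx y). Proof. by case: HT => [[h _]]. Qed.
Lemma pi_surj gam : exists x, pi x = gam. Proof. by case: HT => [[_ h]]. Qed.
Lemma g_cls gam : cls (g gam) = gam. Proof. by case: HT => _ [h _]. Qed.
Lemma g_one : g (cls unito) = unito. Proof. by case: HT => _ [_ h]. Qed.
Lemma phi_add x r s : Rx x r -> Rx x s -> phi x (r + s) = phi x r + phi x s.
Proof. by case: HT => _ _ [h _] _ _; apply: h. Qed.
Lemma phi_inj x r s : Rx x r -> Rx x s -> phi x r = phi x s -> r = s.
Proof. by case: HT => _ _ [_ [h _]] _ _; apply: h. Qed.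
Lemma phi_surj x (f : Mor unito (gx x)) : exists r, Rx x r /\ phi x r = f.
Proof. by case: HT => _ _ [_ [_ h]] _ _; apply: h. Qed.
Lemma cond1 (e : gx 0 = unito) x r s : Rx x r -> Rx 0 s ->
  phi x (r * s) = phi x r \oc eq_rect _ (fun o => Mor unito o) (phi 0 s) _ e.
Proof. by case: HT => _ _ _ h _; apply: h. Qed.
Lemma cond2 x y r s : Rx x r -> Rx y s ->
  translate (phi (x + y) (r * s)) ((phi x r \ot idm (gx y)) \oc lami (gx y) \oc phi y s).
Proof. by case: HT => _ _ _ _ h; apply: h. Qed.

Lemma phi0 x : phi x 0 = 0.
Proof.
have h := phi_add (Rx0 x) (Rx0 x); rewrite addr0 in h.
by apply: (addrI (phi x 0)); rewrite addr0 -h.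
Qed.
Lemma phiN x r : Rx x r -> phi x (- r) = - phi x r.
Proof.
move=> h; apply/eqP; rewrite -addr_eq0 -phi_add ?addNr ?phi0 //; exact: RxN.
Qed.
Lemma phiB x r s : Rx x r -> Rx x s -> phi x (r - s) = phi x r - phi x s.
Proof. by move=> h1 h2; rewrite phi_add ?phiN //; apply: RxN. Qed.

Lemma obj_g (b : Ob C) : exists y (k : Mor b (gx y)), isIso k.
Proof.
have [y ey] := pi_surj (cls b).
have [k [ki [k1 k2]]] : exists k : Mor (gx y) b, isIso k by apply: cls_iso; rewrite g_cls.
by exists y, ki; exists k.
Qed.

Lemma g0 : gx 0 = unito.
Proof.
suff -> : pi 0 = cls unito by exact: g_one.
rewrite -(g_cls (pi 0)).
have [k [ki [k1 k2]]] : exists k : Mor (gx 0) (gx 0 \otO gx 0), isIso k.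
  by apply: cls_iso; rewrite -pi_add addr0 g_cls.
have [g' [w Hw]] := all_invertible ax (gx 0).
have [ei [e1 e2]] := eta_iso Hw (gx 0).
apply: (@iso_cls _ _ _ (w \oc (ki \ot idm g') \oc ei)).
apply: iso_comp; first by exists (eta w (gx 0)).
apply: iso_comp Hw; apply: iso_tens (iso_id _); by exists k.
Qed.

Lemma ract x r (nu : Mor unito unito) : Rx x r ->
  exists s, Rx 0 s /\ phi x r \oc nu = phi x (r * s).
Proof.
move=> hr; have [f ef] := eq_rect_surj g0 nu.
have [s [hs es]] := phi_surj f.
by exists s; split => //; rewrite (cond1 g0 hr hs) es ef.
Qed.

Lemma RxM0 x r s : Rx x r -> Rx 0 s -> Rx x (r * s).
Proof. by move=> h1 h2; have := RxM h1 h2; rewrite addr0. Qed.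

Definition equivJ (a b a' b' : Ob C) (X : Mor a b) (Y : Mor a' b') :=
  forall J : MorPred C, isHomIdealC J -> (J _ _ X <-> J _ _ Y).

Lemma equivJ_sym (a b a' b' : Ob C) (X : Mor a b) (Y : Mor a' b') : equivJ X Y -> equivJ Y X.
Proof. by move=> h J HJ; split => /(h J HJ). Qed.
Lemma equivJ_trans (a b a' b' a'' b'' : Ob C) (X : Mor a b) (Y : Mor a' b') (Z : Mor a'' b'') :
  equivJ X Y -> equivJ Y Z -> equivJ X Z.
Proof. by move=> h1 h2 J HJ; rewrite (h1 J HJ) (h2 J HJ). Qed.
Lemma equivJ_eq (a b : Ob C) (X Y : Mor a b) : X = Y -> equivJ X Y.
Proof. by move=> ->. Qed.
Lemma equivJ_l (a b c : Ob C) (X : Mor a b) (v : Mor b c) : isIso v -> equivJ (v \oc X) X.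
Proof.
move=> [vi [v1 v2]] J HJ; have [Jl Jr _ _] := ideal_facts HJ; split; last exact: Jl.
by move=> /(Jl _ _ _ _ vi); rewrite cA v1 c1l.
Qed.
Lemma equivJ_r (a b c : Ob C) (X : Mor b c) (u : Mor a b) : isIso u -> equivJ (X \oc u) X.
Proof.
move=> [ui [u1 u2]] J HJ; have [Jl Jr _ _] := ideal_facts HJ; split; last exact: Jr.
by move=> /(Jr _ _ _ ui); rewrite -cA u2 c1r.
Qed.
Lemma equivJ_t (a b k : Ob C) (X : Mor a b) : equivJ (X \ot idm k) X.
Proof.
move=> J HJ; have [Jl Jr Jt _] := ideal_facts HJ; split; last exact: Jt.
exact: canc_ideal.
Qed.

Lemma step3 (y x : G) (Psi : Mor (gx y) (gx x)) :
  exists z a, [/\ z + y = x, Rx z a, equivJ Psi (phi z a) &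
    forall q, Rx y q -> exists (Th : Mor (gx (z + y)) (gx x)) (nu : Mor unito unito),
      [/\ isIso Th, isIso nu & Psi \oc phi y q = Th \oc phi (z + y) (a * q) \oc nu]].
Proof.
set z := x - y; have E : z + y = x by rewrite /z subrK.
have [k0 [ki [k1 k2]]] : exists k : Mor (gx z \otO gx y) (gx x), isIso k.
  by apply: cls_iso; rewrite -pi_add E g_cls.
have [be ebe] := full (ki \oc Psi \oc lam (gx y)).
have [a [ha ea]] := phi_surj be.
exists z, a; split => //.
  apply: equivJ_sym; rewrite ea.
  apply: (equivJ_trans (equivJ_sym (@equivJ_t _ _ (gx y) be))); rewrite ebe.
  apply: (equivJ_trans (equivJ_r _ (iso_lam _))).
  by apply: equivJ_l; exists k0.
move=> q hq; have [Th [nu [iTh inu e]]] := trans_red (cond2 ha hq).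
have [Thi [t1 t2]] := iTh.
exists (k0 \oc Th), nu; split.
- by apply: iso_comp iTh _; exists ki.
- done.
- rewrite ea ebe -(cA (lami (gx y))) (lam_lami ax) c1r in e.
  by rewrite -(cA _ Th k0) -(cA nu) -e !cA k2 c1l.
Qed.

Lemma L (I : R -> Prop) (HI : isHomIdealR Rx I) y x r r' (Psi : Mor (gx y) (gx x)) :
  Rx y r -> I r -> Rx x r' -> phi x r' = Psi \oc phi y r -> I r'.
Proof.
case: HI => I0 IB IMl IMr _ hr Ir hr' e.
have [z [a [E ha _ hq]]] := step3 Psi.
have [Th [nu [_ _ e2]]] := hq r hr.
rewrite e2 in e.
have key : forall x0 (E0 : x0 = x) (Th0 : Mor (gx x0) (gx x)) p, Rx x0 p -> I p ->
    phi x r' = Th0 \oc phi x0 p \oc nu -> I r'.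
  move=> x0 E0; subst x0 => Th0 p hp Ip e0.
  have [mu emu] := endo Th0.
  rewrite emu -cA in e0.
  have [s [hs es]] := ract (mu \oc nu) hp.
  rewrite es in e0.
  have -> : r' = p * s by apply: (phi_inj hr' (RxM0 hp hs) e0).
  exact: IMr.
by apply: (key _ E Th (a * r)); [apply: RxM | apply: IMl | ].
Qed.

Lemma Jphi (I : R -> Prop) (HI : isHomIdealR Rx I) y r x (h : Ob C)
  (u : Mor unito (h \otO unito)) (v : Mor (h \otO gx y) (gx x)) r' :
  Rx y r -> I r -> Rx x r' -> phi x r' = v \oc (idm h \ot phi y r) \oc u -> I r'.
Proof.
move=> hr Ir hr' e.
have [Th [nu [_ e2 _]]] := red (phi y r) u v.
rewrite e2 -cA in e.
have [s [hs es]] := ract nu hr.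
rewrite es in e.
apply: (L HI (RxM0 hr hs) _ hr' e).
by case: HI => _ _ _ IMr _; apply: IMr.
Qed.
Definition Jd (I : R -> Prop) : MorPred C := fun a b t =>
  forall x (h : Ob C) (u : Mor unito (h \otO a)) (v : Mor (h \otO b) (gx x)) r',
    Rx x r' -> phi x r' = v \oc (idm h \ot t) \oc u -> I r'.

Lemma tens_id_comp (h a b c : Ob C) (f : Mor a b) (f' : Mor b c) :
  idm h \ot (f' \oc f) = (idm h \ot f') \oc (idm h \ot f).
Proof. by rewrite -tC c1l. Qed.

Section JdSec.
Variable I : R -> Prop.
Hypothesis HI : isHomIdealR Rx I.

Lemma Jd_l (a b c : Ob C) (f : Mor a b) (f' : Mor b c) : Jd I f -> Jd I (f' \oc f).
Proof.
move=> hf x h u v r' hr' e; apply: (hf x h u (v \oc (idm h \ot f')) r' hr').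
by rewrite e tens_id_comp !cA.
Qed.
Lemma Jd_r (a b c : Ob C) (f : Mor a b) (f' : Mor b c) : Jd I f' -> Jd I (f' \oc f).
Proof.
move=> hf x h u v r' hr' e; apply: (hf x h ((idm h \ot f) \oc u) v r' hr').
by rewrite e tens_id_comp !cA.
Qed.
Lemma Jd_tl (k a b : Ob C) (f : Mor a b) : Jd I f -> Jd I (idm k \ot f).
Proof.
move=> hf x h u v r' hr' e.
have [ai [a1 a2]] := alpha_iso ax h k a.
apply: (hf x (h \otO k) (ai \oc u) (v \oc alpha h k b) r' hr').
by rewrite e -tI -(cA _ (alpha h k b) v) (alpha_nat ax) -!cA (cA u ai) a2 c1l.
Qed.
Lemma Jd_tr (k a b : Ob C) (f : Mor a b) : Jd I f -> Jd I (f \ot idm k).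
Proof.
move=> hf.
have -> : f \ot idm k = beta k b \oc (idm k \ot f) \oc beta a k.
  by rewrite (beta_nat ax) -cA (symmetry ax) c1r.
by apply: Jd_r; apply: Jd_l; apply: Jd_tl.
Qed.

Lemma Jd_ideal : isHomIdealC (Jd I).
Proof.
have [I0 IB _ _ _] := HI.
split.
- move=> a b x h u v r' hr'; rewrite tens0r comp0r comp0l -(phi0 x) => e.
  by rewrite (phi_inj hr' (Rx0 x) e).
- move=> a b f f' hf hf' x h u v r' hr' e.
  have [r1 [h1 e1]] := phi_surj (v \oc (idm h \ot f) \oc u).
  have [r2 [h2 e2]] := phi_surj (v \oc (idm h \ot f') \oc u).
  have -> : r' = r1 - r2.
    apply: (phi_inj hr' (RxB h1 h2)).
    by rewrite phiB // e1 e2 e tensBr compBr compBl.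
  apply: IB; [exact: (hf x h u v r1 h1) | exact: (hf' x h u v r2 h2)].
- by move=> *; apply: Jd_l.
- by move=> *; apply: Jd_r.
- by move=> h a b f hf; split; [apply: Jd_tl | apply: Jd_tr].
Qed.

Lemma Jd_phi y r : Rx y r -> I r -> Jd I (phi y r).
Proof. move=> hr Ir x h u v r' hr' e; exact: (Jphi HI hr Ir hr' e). Qed.

Lemma Jd_self x r : Rx x r -> Jd I (phi x r) -> I r.
Proof.
move=> hr /(_ x unito (lami unito) (lam (gx x)) r hr); apply.
by rewrite (lam_nat ax) -cA (lam_lami ax) c1r.
Qed.

Lemma eI_phi x r : Rx x r -> eI Rx phi I (phi x r) -> I r.
Proof.
move=> hr h; apply: (Jd_self hr); apply: h; first exact: Jd_ideal.
by move=> y q hq Iq; apply: Jd_phi.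
Qed.

End JdSec.

Lemma step12 (a b c : Ob C) (t : Mor a b) (s : Mor b c) :
  exists y q (c' : Ob C) (s2 : Mor (gx y) c'),
    [/\ Rx y q, equivJ t (phi y q), equivJ s s2 & equivJ (s \oc t) (s2 \oc phi y q)].
Proof.
have [a' [w [wi [w1 w2]]]] := all_invertible ax a.
have [y [k [ki [k1 k2]]]] := obj_g (b \otO a').
have [q [hq eq]] := phi_surj (k \oc ((t \ot idm a') \oc wi)).
exists y, q, (c \otO a'), ((s \ot idm a') \oc ki); split => //.
- rewrite eq; apply: equivJ_sym.
  apply: (equivJ_trans (equivJ_l _ (ex_intro _ ki (conj k1 k2)))).
  apply: (equivJ_trans (equivJ_r _ (ex_intro _ w (conj w2 w1)))).
  exact: equivJ_t.
- apply: equivJ_sym.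
  apply: (equivJ_trans (equivJ_r _ (ex_intro _ k (conj k2 k1)))).
  exact: equivJ_t.
- rewrite eq -cA (cA _ k ki) k1 c1l cA -tC c1l.
  apply: equivJ_sym.
  apply: (equivJ_trans (equivJ_r _ (ex_intro _ w (conj w2 w1)))).
  exact: equivJ_t.
Qed.

Lemma normalize (a b : Ob C) (t : Mor a b) : exists y q, Rx y q /\ equivJ t (phi y q).
Proof. by have [y [q [_ [_ [hq e _ _]]]]] := step12 t (idm b); exists y, q. Qed.

Lemma factor (a b c : Ob C) (t : Mor a b) (s : Mor b c) :
  exists z y r q, [/\ Rx z r, Rx y q, equivJ t (phi y q), equivJ s (phi z r)
     & equivJ (s \oc t) (phi (z + y) (r * q))].
Proof.
have [y [q [c' [s2 [hq et es est]]]]] := step12 t s.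
have [x [k [ki [k1 k2]]]] := obj_g c'.
have ik : isIso k by exists ki.
have [z [r [E hr eP hP]]] := step3 (k \oc s2).
have [Th [nu [iTh inu e]]] := hP q hq.
exists z, y, r, q; split => //.
- apply: (equivJ_trans es); apply: (equivJ_trans _ eP).
  exact: equivJ_sym (equivJ_l _ ik).
- apply: (equivJ_trans est).
  apply: (equivJ_trans (equivJ_sym (equivJ_l _ ik))).
  rewrite cA e.
  apply: (equivJ_trans (equivJ_r _ inu)); exact: equivJ_l.
Qed.
Lemma sum_part n (f : 'I_n -> R) (xs : 'I_n -> G) :
  \sum_(z <- undup [seq xs i | i <- enum 'I_n]) \sum_(i < n | xs i == z) f i = \sum_(i < n) f i.
Proof.
under eq_bigr do rewrite big_mkcond.
rewrite exchange_big /=; apply: eq_bigr => i _.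
rewrite (bigD1_seq (xs i)) ?undup_uniq //=; last by rewrite mem_undup map_f ?mem_enum.
rewrite eqxx big1 ?addr0 // => z hz.
by rewrite eq_sym (negbTE hz).
Qed.

Lemma Rx_sum x n (P : pred 'I_n) (F : 'I_n -> R) :
  (forall i, P i -> Rx x (F i)) ->
  Rx x (\sum_(i < n | P i) F i) /\ phi x (\sum_(i < n | P i) F i) = \sum_(i < n | P i) phi x (F i).
Proof.
move=> hF; apply: (big_ind2 (fun a b => Rx x a /\ phi x a = b)).
- by split; [exact: Rx0 | exact: phi0].
- by move=> a1 b1 a2 b2 [h1 e1] [h2 e2]; split; [exact: RxD | rewrite phi_add // e1 e2].
- by move=> i Pi; split => //; apply: hF.
Qed.

Lemma zero_comp n (f : 'I_n -> R) (xs : 'I_n -> G) :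
  (forall i, Rx (xs i) (f i)) -> \sum_(i < n) f i = 0 ->
  forall x, \sum_(i < n | xs i == x) f i = 0.
Proof.
move=> hf h0 x.
have HF z : Rx z (\sum_(i < n | xs i == z) f i).
  by case: (Rx_sum (x := z) (P := fun i => xs i == z) (F := f)) => // i /eqP <-.
case: (boolP (x \in undup [seq xs i | i <- enum 'I_n])) => hx.
  exact: (decomp_uniq (F := fun z => \sum_(i < n | xs i == z) f i) (undup_uniq _) HF (etrans (sum_part f xs) h0) hx).
rewrite big_pred0 // => i; apply/negbTE; apply/negP => /eqP ex; move/negP: hx; apply.
by rewrite -ex mem_undup map_f ?mem_enum.
Qed.

Lemma comp_hom n (f : 'I_n -> R) (xs : 'I_n -> G) x r :
  (forall i, Rx (xs i) (f i)) -> Rx x r -> r = \sum_(i < n) f i ->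
  r = \sum_(i < n | xs i == x) f i.
Proof.
move=> hf hr e.
pose f' (j : 'I_n.+1) := if unlift ord0 j is Some i then f i else - r.
pose xs' (j : 'I_n.+1) := if unlift ord0 j is Some i then xs i else x.
have hf' j : Rx (xs' j) (f' j).
  by rewrite /f' /xs'; case: unlift => [i|]; [apply: hf | apply: RxN].
have s0 : \sum_j f' j = 0.
  rewrite big_ord_recl /f' unlift_none.
  under eq_bigr => i _ do rewrite liftK.
  by rewrite -e addNr.
have := zero_comp hf' s0 x.
rewrite big_mkcond big_ord_recl /xs' /f' unlift_none eqxx.
under eq_bigr => i _ do rewrite liftK.
rewrite -big_mkcond /= => /eqP; rewrite addrC subr_eq0 => /eqP ->.
done.
Qed.

Lemma uniq_comp n m (f : 'I_n -> R) (xs : 'I_n -> G) (h : 'I_m -> R) (ys : 'I_m -> G) :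
  (forall i, Rx (xs i) (f i)) -> (forall j, Rx (ys j) (h j)) ->
  \sum_(i < n) f i = \sum_(j < m) h j ->
  forall x, \sum_(i < n | xs i == x) f i = \sum_(j < m | ys j == x) h j.
Proof.
move=> hf hh e x.
pose f' (k : 'I_(n + m)) := match split k with inl i => f i | inr j => - h j end.
pose xs' (k : 'I_(n + m)) := match split k with inl i => xs i | inr j => ys j end.
have hf' k : Rx (xs' k) (f' k).
  by rewrite /f' /xs'; case: split => [i|j]; [apply: hf | apply: RxN].
have s0 : \sum_k f' k = 0.
  rewrite big_split_ord /f' /=.
  under eq_bigr => i _ do rewrite (unsplitK (inl _ i)).
  under [X in _ + X]eq_bigr => j _ do rewrite (unsplitK (inr _ j)).
  by rewrite sumrN e addrN.
have := zero_comp hf' s0 x.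
rewrite big_split_ord /f' /xs' /=.
under eq_bigl => i do rewrite (unsplitK (inl _ i)).
under eq_bigr => i _ do rewrite (unsplitK (inl _ i)).
under [X in _ + X]eq_bigl => j do rewrite (unsplitK (inr _ j)).
under [X in _ + X]eq_bigr => j _ do rewrite (unsplitK (inr _ j)).
by rewrite sumrN => /eqP; rewrite subr_eq0 => /eqP.
Qed.

Lemma decomp_ord a : exists n (F : 'I_n -> R) (zs : 'I_n -> G),
  (forall i, Rx (zs i) (F i)) /\ a = \sum_(i < n) F i.
Proof.
have [s [F [_ hF ->]]] := decomp_ex a.
exists (size s), (fun i => F (nth 0 s i)), (fun i => nth 0 s i); split => //.
by rewrite (big_nth 0) big_mkord.
Qed.

Lemma J_add (J : MorPred C) (HJ : isHomIdealC J) (a b : Ob C) (f f' : Mor a b) :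
  J _ _ f -> J _ _ f' -> J _ _ (f + f').
Proof.
case: HJ => J0 JB _ _ _ h1 h2.
by have := JB _ _ f (0 - f') h1 (JB _ _ 0 f' (J0 _ _) h2); rewrite sub0r opprK.
Qed.
Lemma J_neg (J : MorPred C) (HJ : isHomIdealC J) (a b : Ob C) (f : Mor a b) :
  J _ _ f -> J _ _ (- f).
Proof. by case: HJ => J0 JB _ _ _ h1; have := JB _ _ 0 f (J0 _ _) h1; rewrite sub0r. Qed.
Lemma I_add (I : R -> Prop) (HI : isHomIdealR Rx I) r s : I r -> I s -> I (r + s).
Proof.
case: HI => I0 IB _ _ _ h1 h2.
by have := IB r (0 - s) h1 (IB 0 s I0 h2); rewrite sub0r opprK.
Qed.

Lemma rI_single (I : MorPred C) x q : Rx x q -> I _ _ (phi x q) -> rI Rx phi I q.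
Proof. by move=> hq Iq; exists 1, (fun _ => q), (fun _ => x); split; [| rewrite big_ord1]. Qed.
Lemma rI_0 (I : MorPred C) : rI Rx phi I 0.
Proof. by exists 0, (fun _ => 0), (fun _ => 0); split; [case | rewrite big_ord0]. Qed.
Lemma rI_add (I : MorPred C) r s : rI Rx phi I r -> rI Rx phi I s -> rI Rx phi I (r + s).
Proof.
move=> [n [f [xs [hf ->]]]] [m [h [ys [hh ->]]]].
exists (n + m), (fun k => match split k with inl i => f i | inr j => h j end),
  (fun k => match split k with inl i => xs i | inr j => ys j end).
split.
  by move=> k; case: (split k) => [i|j]; [exact: hf | exact: hh].
rewrite big_split_ord /=; congr (_ + _); apply: eq_bigr => i _.
  by rewrite (unsplitK (inl _ i)).
by rewrite (unsplitK (inr _ i)).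
Qed.

Lemma trans_equiv (Y Z : Ob C) (r : Mor unito Y) (t : Mor unito Z) :
  translate r t -> equivJ t r.
Proof.
move=> /trans_red [Th [nu [iTh inu ->]]].
apply: (equivJ_trans (equivJ_r _ inu)); exact: equivJ_l.
Qed.

Lemma rI_phi (J : MorPred C) (HJ : isHomIdealC J) x r : Rx x r -> rI Rx phi J r -> J _ _ (phi x r).
Proof.
move=> hr [n [f [xs [hf e]]]].
rewrite (comp_hom (fun i => (hf i).1) hr e).
have hs : forall i, xs i == x -> Rx x (f i) by move=> i /eqP <-; exact: (hf i).1.
have [_ ->] := Rx_sum (P := fun i => xs i == x) hs.
apply: big_ind => [|a b|i /eqP exi].
- by case: HJ.
- exact: J_add.
- by have := (hf i).2; rewrite exi.
Qed.

Lemma rI_ideal (I : MorPred C) (HI : isHomIdealC I) : isHomIdealR Rx (rI Rx phi I).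
Proof.
have [Jl Jr Jt _] := ideal_facts HI.
have rIsum : forall n (F : 'I_n -> R), (forall i, rI Rx phi I (F i)) -> rI Rx phi I (\sum_(i < n) F i).
  by move=> n F hF; apply: big_ind => //; [exact: rI_0 | exact: rI_add].
split.
- exact: rI_0.
- move=> r s hr [n [f [xs [hf ->]]]]; apply: rI_add => //.
  rewrite -sumrN; apply: (rIsum) => i; apply: (rI_single (RxN (hf i).1)).
  by rewrite (phiN (hf i).1); apply: (J_neg HI); exact: (hf i).2.
- move=> a r [n [f [xs [hf ->]]]]. 
  have [m [F [zs [hF ->]]]] := decomp_ord a.
  rewrite mulr_suml; apply: (rIsum) => j; rewrite mulr_sumr; apply: (rIsum) => i.
  apply: (rI_single (RxM (hF j) (hf i).1)).
  apply/(trans_equiv (cond2 (hF j) (hf i).1) HI).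
  by apply: Jl; exact: (hf i).2.
- move=> a r [n [f [xs [hf ->]]]].
  have [m [F [zs [hF ->]]]] := decomp_ord a.
  rewrite mulr_suml; apply: (rIsum) => i; rewrite mulr_sumr; apply: (rIsum) => j.
  apply: (rI_single (RxM (hf i).1 (hF j))).
  apply/(trans_equiv (cond2 (hf i).1 (hF j)) HI).
  by apply: (Jr); apply: (Jr); apply: (Jt); exact: (hf i).2.
- move=> r [n [f [xs [hf e]]]]; exists n, f; split => // i; split.
    by exists (xs i); exact: (hf i).1.
  exact: (rI_single (hf i).1 (hf i).2).
Qed.
Lemma eI_ideal (I : R -> Prop) : isHomIdealC (eI Rx phi I).
Proof.
split.
- by move=> a b J HJ _; case: HJ.
- move=> a b f f' h1 h2 J HJ hJ; case: (HJ) => _ JB _ _ _.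
  by apply: JB; [exact: h1 | exact: h2].
- move=> a b c f f' h J HJ hJ; case: (HJ) => _ _ Jl _ _; apply: Jl; exact: h.
- move=> a b c f f' h J HJ hJ; case: (HJ) => _ _ _ Jr _; apply: Jr; exact: h.
- move=> h a b f hf; split => J HJ hJ; case: (HJ) => _ _ _ _ Jt;
  by have [? ?] := Jt h a b f (hf J HJ hJ).
Qed.

Lemma er_C (I : MorPred C) (HI : isHomIdealC I) : eI Rx phi (rI Rx phi I) = I.
Proof.
apply: functional_extensionality_dep => a; apply: functional_extensionality_dep => b.
apply: functional_extensionality => t; apply: propositional_extensionality; split.
  by move=> h; apply: h => // x r hr hrI; exact: rI_phi.
move=> It J HJ hJ; have [y [q [hq e]]] := normalize t.
apply/(e J HJ); apply: hJ => //; apply: (rI_single hq).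
by apply/(e I HI).
Qed.

Lemma re_R (I : R -> Prop) (HI : isHomIdealR Rx I) : rI Rx phi (eI Rx phi I) = I.
Proof.
apply: functional_extensionality => r; apply: propositional_extensionality; split.
  move=> [n [f [xs [hf ->]]]].
  apply: big_ind => [|a b|i _]; [by case: HI | exact: I_add | exact: (eI_phi HI (hf i).1 (hf i).2)].
move=> Ir; case: (HI) => _ _ _ _ Hdec; have [n [f [hf ->]]] := Hdec r Ir.
have [xs hxs] : exists xs : 'I_n -> G, forall i, Rx (xs i) (f i).
  exists (fun i => proj1_sig (constructive_indefinite_description _ (hf i).1)).
  by move=> i; exact: (proj2_sig (constructive_indefinite_description _ (hf i).1)).
exists n, f, xs; split => // i; split => //.
by move=> J HJ hJ; apply: hJ => //; exact: (hf i).2.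
Qed.

Lemma rI_prime (P : MorPred C) : isPrimeC P -> isHomPrimeR Rx (rI Rx phi P).
Proof.
case=> HP [a [b [t nt]]] Hpr.
have [Jl Jr Jt Jt'] := ideal_facts HP.
split.
- exact: rI_ideal.
- have [y [q [hq e]]] := normalize t.
  by exists q => hrq; apply: nt; apply/(e P HP); exact: rI_phi.
- move=> r s [x hr] [y hs] hrs.
  have Hp := rI_phi HP (RxM hr hs) hrs.
  have [h [u [v [iu iv eT]]]] := cond2 hr hs.
  have PT : P _ _ ((phi x r \ot idm (gx y)) \oc lami (gx y) \oc phi y s).
    by rewrite eT; apply: (Jr); apply: (Jl); apply: (Jt').
  case: (Hpr _ _ _ _ _ PT) => [Pl | Ps].
    left; apply: (rI_single hr); apply: (canc_ideal HP (g0 := gx y)).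
    have := Jr _ _ _ (lam (gx y)) _ Pl.
    by rewrite -cA (lami_lam ax) c1r.
  by right; apply: (rI_single hs).
Qed.

Lemma eI_prime (Q : R -> Prop) : isHomPrimeR Rx Q -> isPrimeC (eI Rx phi Q).
Proof.
case=> HQ [r0 nr0] Hpr.
split.
- exact: eI_ideal.
- have [x [q [hq nq]]] : exists x q, Rx x q /\ ~ Q q.
    apply: NNPP => hn; apply: nr0.
    have [n [f [xs [hf ->]]]] := decomp_ord r0.
    apply: big_ind => [|a b|i _]; [by case: HQ | exact: I_add | ].
    by apply: NNPP => nQ; apply: hn; exists (xs i), (f i).
  by exists unito, (gx x), (phi x q) => h; apply: nq; exact: (eI_phi HQ hq h).
- move=> a b c t s hst.
  have [z [y [r [q [hr hq et es est]]]]] := factor t s.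
  have h1 := (est _ (eI_ideal Q)).1 hst.
  have hQ := eI_phi HQ (RxM hr hq) h1.
  case: (Hpr r q (ex_intro _ z hr) (ex_intro _ y hq) hQ) => [Qr|Qq].
    by left; apply/(es _ (eI_ideal Q)) => J HJ hJ; exact: hJ _ _ hr Qr.
  by right; apply/(et _ (eI_ideal Q)) => J HJ hJ; exact: hJ _ _ hq Qq.
Qed.

Definition fmap (P : Spc C) : SpecH Rx :=
  exist _ (rI Rx phi (proj1_sig P)) (rI_prime (proj2_sig P)).
Definition hmap (Q : SpecH Rx) : Spc C :=
  exist _ (eI Rx phi (proj1_sig Q)) (eI_prime (proj2_sig Q)).

Lemma fmap_basic (Z : SpecH Rx -> Prop) : zariskiR Z -> zariskiC (fun P => Z (fmap P)).
Proof.
move=> [S hS].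
exists (fun a b t => exists r n (f : 'I_n -> R) (xs : 'I_n -> G) x,
  [/\ S r, (forall i, Rx (xs i) (f i)), r = \sum_(i < n) f i &
      forall J : MorPred C, J _ _ (phi x (\sum_(i < n | xs i == x) f i)) -> J a b t]).
move=> P; rewrite hS /=.
have [HP _ _] := proj2_sig P.
split.
- move=> hall a b t [r [n [f [xs [x [Sr hf er hJ]]]]]]; apply: hJ.
  have [m [h [ys [hh e2]]]] := hall r Sr.
  rewrite (uniq_comp hf (fun j => (hh j).1) (etrans (esym er) e2)).
  have hs : forall j, ys j == x -> Rx x (h j) by move=> j /eqP <-; exact: (hh j).1.
  have [hx _] := Rx_sum (P := fun j => ys j == x) hs.
  apply: (rI_phi HP hx).
  exists m, (fun j => if ys j == x then h j else 0), ys; split; last by rewrite big_mkcond.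
  move=> j; case: ifP => _; first exact: hh.
  by split; [exact: Rx0 | rewrite phi0; case: HP].
- move=> hinc r Sr.
  have [n [f [xs [hf er]]]] := decomp_ord r.
  rewrite er -(sum_part f xs).
  apply: big_ind => [|a b|z _]; [exact: rI_0 | exact: rI_add | ].
  have hs : forall i, xs i == z -> Rx z (f i) by move=> i /eqP <-; exact: hf.
  have [hz _] := Rx_sum (P := fun i => xs i == z) hs.
  apply: (rI_single hz); apply: hinc.
  by exists r, n, f, xs, z; split.
Qed.

Lemma hmap_basic (Z : Spc C -> Prop) : zariskiC Z -> zariskiR (fun Q => Z (hmap Q)).
Proof.
move=> [S hS].
exists (fun r => exists a b (t : Mor a b) x, [/\ S a b t, Rx x r & equivJ t (phi x r)]).
move=> Q; rewrite hS /=.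
have [HQ _ _] := proj2_sig Q.
split.
- move=> hinc r [a [b [t [x [St hr et]]]]].
  apply: (eI_phi HQ hr); apply/(et _ (eI_ideal _)); exact: hinc.
- move=> hall a b t St.
  have [y [q [hq e]]] := normalize t.
  apply/(e _ (eI_ideal _)) => J HJ hJ; apply: (hJ _ _ hq).
  by apply: hall; exists a, b, t, y; split.
Qed.

Lemma main :
  (forall I : MorPred C, isHomIdealC I -> isHomIdealR Rx (rI Rx phi I)) /\
  (forall I : R -> Prop, isHomIdealR Rx I -> isHomIdealC (eI Rx phi I)) /\
  (forall I : MorPred C, isHomIdealC I -> eI Rx phi (rI Rx phi I) = I) /\
  (forall I : R -> Prop, isHomIdealR Rx I -> rI Rx phi (eI Rx phi I) = I) /\
  (forall I J : MorPred C, isHomIdealC I -> isHomIdealC J -> morIncl I J ->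
      forall r, rI Rx phi I r -> rI Rx phi J r) /\
  (forall I J : R -> Prop, isHomIdealR Rx I -> isHomIdealR Rx J ->
      (forall r, I r -> J r) -> morIncl (eI Rx phi I) (eI Rx phi J)) /\
  (exists (f : Spc C -> SpecH Rx) (h : SpecH Rx -> Spc C),
        (forall P, proj1_sig (f P) = rI Rx phi (proj1_sig P)) /\
        (forall Q, proj1_sig (h Q) = eI Rx phi (proj1_sig Q)) /\
        [/\ cancel f h, cancel h f,
            continuous_gen (@zariskiC C) (@zariskiR G R Rx) f
          & continuous_gen (@zariskiR G R Rx) (@zariskiC C) h]).
Proof.
split; first exact: rI_ideal.
split; first by move=> I _; exact: eI_ideal.
split; first exact: er_C.
split; first exact: re_R.
split.
  move=> I J _ _ hIJ r [n [f [xs [hf e]]]]; exists n, f, xs; split => // i.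
  by split; [exact: (hf i).1 | apply: hIJ; exact: (hf i).2].
split.
  move=> I J _ _ hIJ a b t ht K HK hK; apply: ht => // x r hr Ir; apply: hK => //; exact: hIJ.
exists fmap, hmap; split => //; split => //; split.
- move=> P; apply: sig_eq => /=; apply: er_C; by case: (proj2_sig P).
- move=> Q; apply: sig_eq => /=; apply: re_R; by case: (proj2_sig Q).
- apply: cont_of_basic; exact: fmap_basic.
- apply: cont_of_basic; exact: hmap_basic.
Qed.

End Ring.

Theorem theoremA15 (C : twoRing) (G : zmodType) (R : pzRingType)
    (Rx : G -> R -> Prop) (tau : G -> G -> R)
    (pi : G -> K0 C) (g : K0 C -> Ob C)
    (phi : forall x : G, R -> Mor unito (g (pi x))) :
  gradedComRing Rx tau ->
  @tightening C G R Rx pi g phi ->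
  (forall I : MorPred C, isHomIdealC I -> isHomIdealR Rx (rI Rx phi I)) /\
  (forall I : R -> Prop, isHomIdealR Rx I -> isHomIdealC (eI Rx phi I)) /\
  (forall I : MorPred C, isHomIdealC I -> eI Rx phi (rI Rx phi I) = I) /\
  (forall I : R -> Prop, isHomIdealR Rx I -> rI Rx phi (eI Rx phi I) = I) /\
  (forall I J : MorPred C, isHomIdealC I -> isHomIdealC J -> morIncl I J ->
      forall r, rI Rx phi I r -> rI Rx phi J r) /\
  (forall I J : R -> Prop, isHomIdealR Rx I -> isHomIdealR Rx J ->
      (forall r, I r -> J r) -> morIncl (eI Rx phi I) (eI Rx phi J)) /\
  (exists (f : Spc C -> SpecH Rx) (h : SpecH Rx -> Spc C),
        (forall P, proj1_sig (f P) = rI Rx phi (proj1_sig P)) /\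
        (forall Q, proj1_sig (h Q) = eI Rx phi (proj1_sig Q)) /\
        [/\ cancel f h, cancel h f,
            continuous_gen (@zariskiC C) (@zariskiR G R Rx) f
          & continuous_gen (@zariskiR G R Rx) (@zariskiC C) h]).
Proof. move=> HR HT; exact: (main HR HT). Qed.
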